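(* Let $n\ge 3$ and $h$ be integers with $1\le h\le n-2$, and let $\delta>1$. Let $D$ be the real symmetric $(n-1)\times(n-1)$ block matrix \[ D=\begin{bmatrix}(-3+\delta^2)J_h & -(1+\delta^2)J_{h,n-h-1}\\ -(1+\delta^2)J_{n-h-1,h} & (1-3\delta^2)J_{n-h-1}\end{bmatrix}, \] where $J_{p,q}$ is the $p\times q$ all-ones matrix and $J_p=J_{p,p}$. Then the spectrum of $D$ is $\{[a_2],[0]^{n-3},[a_1]\}$ (exponents denote multiplicities) with $a_2<0<a_1$, where for $i=1,2$ \[ a_i=-2(1-\delta^2)h+\frac{1-3\delta^2}{2}(n-1)+(-1)^{i+1}\sqrt{2(n-1)h(1-\delta^2)(1+\delta^2)+(n-1)^2\left(\frac{1-3\delta^2}{2}\right)^2}. \] *)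

(* Defs.v *)
From HB Require Import structures.
From mathcomp Require Import all_boot all_order all_algebra.
Set Implicit Arguments. Unset Strict Implicit. Unset Printing Implicit Defensive.
Import Order.TTheory GRing.Theory Num.Theory.
Local Open Scope ring_scope.

Definition Dmat (R : nzRingType) (n h : nat) (delta : R) :
  'M[R]_(h + (n - h - 1)) :=
  block_mx (const_mx (-3 + delta ^+ 2)) (const_mx (- (1 + delta ^+ 2)))
           (const_mx (- (1 + delta ^+ 2))) (const_mx (1 - 3 * delta ^+ 2)).

Definition a_val (R : rcfType) (n h : nat) (delta : R) (i : nat) : R :=
  - 2%:R * (1 - delta ^+ 2) * h%:R + (1 - 3 * delta ^+ 2) / 2%:R * (n - 1)%:R
  + (-1) ^+ (i + 1) *
    Num.sqrt (2%:R * (n - 1)%:R * h%:R * (1 - delta ^+ 2) * (1 + delta ^+ 2)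
              + (n - 1)%:R ^+ 2 * ((1 - 3 * delta ^+ 2) / 2%:R) ^+ 2).

(* Main.v *)
Require Import Defs.
From HB Require Import structures.
From mathcomp Require Import all_boot all_order all_algebra ring lra zify.
Import Order.TTheory GRing.Theory Num.Theory.
Local Open Scope ring_scope.
Lemma sylv (K : comNzRingType) m k (U : 'M[K]_(m,k)) (V : 'M[K]_(k,m)) (x : K) :
  x ^+ k * \det (x%:M - U *m V) = x ^+ m * \det (x%:M - V *m U).
Proof.
set M := block_mx (x%:M) U V (1%:M : 'M_k).
have h1 : block_mx 1%:M 0 (-V) (x%:M) *m M = block_mx (x%:M) U 0 (x%:M - V *m U).
  rewrite /M mulmx_block !mulmx1 !mul1mx !mul0mx !addr0 !mulNmx. idtac.
  by rewrite !mul_scalar_mx !mul_mx_scalar addNr addrC.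
have h2 : M *m block_mx 1%:M 0 (-V) 1%:M = block_mx (x%:M - U *m V) U 0 1%:M.
  rewrite /M mulmx_block !mulmx1 !mulmx0 !mulmxN mul1mx !add0r subrr.
  done.
have := congr1 determinant h1; rewrite det_mulmx det_lblock det_ublock !det_scalar expr1n mul1r => <-.
have := congr1 determinant h2; rewrite det_mulmx det_lblock det_ublock !det_scalar !expr1n !mulr1 => ->.
by [].
Qed.

Lemma det2 (K : comNzRingType) (A : 'M[K]_2) : \det A = A 0 0 * A 1 1 - A 0 1 * A 1 0.
Proof.
rewrite (expand_det_row _ 0) !big_ord_recl big_ord0 /cofactor !det_mx11 !mxE /=.
rewrite addr0 expr0 expr1 !mul1r mulN1r mulrN. congr (_ * _ - _ * _); congr (A _ _); exact: val_inj.
Qed.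

Lemma blk (K : comNzRingType) (a b c d : K) :
  let B := (block_mx (const_mx a) (const_mx b) (const_mx c) (const_mx d) : 'M[K]_(1+1)) in
  [/\ B 0 0 = a, B 0 1 = b, B 1 0 = c & B 1 1 = d].
Proof.
have e0 : (0 : 'I_(1+1)) = lshift 1 0 by apply: val_inj.
have e1 : (1 : 'I_(1+1)) = rshift 1 0 by apply: val_inj.
by rewrite /= e0 e1 block_mxEul block_mxEur block_mxEdl block_mxEdr !mxE.
Qed.

Lemma realpart (R : rcfType) (n h : nat) (delta : R)
  (hn : (3 <= n)%N) (hh1 : (1 <= h)%N) (hh2 : (h <= n - 2)%N) (hd : 1 < delta) :
  let q := (n - h - 1)%N in
  let al := -3 + delta ^+ 2 in let be := - (1 + delta ^+ 2) in let ga := 1 - 3 * delta ^+ 2 in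
  [/\ a_val n h delta 2 + a_val n h delta 1 = h%:R * al + q%:R * ga,
      a_val n h delta 2 * a_val n h delta 1 = h%:R * al * (q%:R * ga) - h%:R * be * (q%:R * be)
    & a_val n h delta 2 < 0 < a_val n h delta 1].
Proof.
move=> q al be ga.
have hN : (n - 1)%:R = h%:R + q%:R :> R by rewrite -natrD; congr (_ %:R); rewrite /q; lia.
have hq : (0 : R) < q%:R by rewrite ltr0n /q; lia.
have hh : (0 : R) < h%:R by rewrite ltr0n; lia.
rewrite /a_val hN.
set t := - 2%:R * (1 - delta ^+ 2) * h%:R + (1 - 3 * delta ^+ 2) / 2%:R * (h%:R + q%:R).
set S := (X in Num.sqrt X).
have eS : S = t ^+ 2 + 4%:R * (delta ^+ 2 - 1) ^+ 2 * (h%:R * q%:R).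
  by rewrite /S /t; field.
have hd2 : 0 < delta ^+ 2 - 1 by nra.
have hpos : 0 < 4%:R * (delta ^+ 2 - 1) ^+ 2 * (h%:R * q%:R).
  by rewrite !mulr_gt0 // ?exprn_gt0 // ltr0n.
have S0 : 0 <= S by rewrite eS; apply: addr_ge0; [exact: sqr_ge0 | exact: ltW].
have sS := sqr_sqrtr S0.
have lt : `|t| < Num.sqrt S.
  rewrite -sqrtr_sqr ltr_sqrt; last by rewrite eS; apply: ltr_wpDl; [exact: sqr_ge0|].
  by rewrite eS ltrDl.
move: lt; rewrite ltr_norml => /andP [l1 l2].
have e2 : (-1 : R) ^+ (2 + 1) = -1 by rewrite exprS sqrrN expr1n mulr1.
have e1 : (-1 : R) ^+ (1 + 1) = 1 by rewrite sqrrN expr1n.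
rewrite e1 e2 !mulN1r !mul1r.
split.
- by rewrite /al /ga /t; field.
- rewrite -[_ * _]/(_) ; have -> : (t - Num.sqrt S) * (t + Num.sqrt S) = t^+2 - Num.sqrt S ^+ 2 by ring.
  rewrite sS eS /al /be /ga; ring.
- apply/andP; split; lra.
Qed.

Lemma constM1 (K : comNzRingType) p r (a b : K) :
  (const_mx a : 'M_(p,1)) *m (const_mx b : 'M_(1,r)) = const_mx (a * b).
Proof. by apply/matrixP => i j; rewrite !mxE big_ord1 !mxE. Qed.

Lemma constMk (K : comNzRingType) k (a b : K) :
  (const_mx a : 'M_(1,k)) *m (const_mx b : 'M_(k,1)) = const_mx (k%:R * (a * b)).
Proof.
apply/matrixP => i j; rewrite !mxE (eq_bigr (fun _ => a * b)) => [|l _]; last by rewrite !mxE.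
by rewrite sumr_const card_ord mulr_natl.
Qed.

Lemma quad (R : comNzRingType) (a b c d x y : R) :
  x + y = a + d -> x * y = a * d - b * c ->
  ('X - a%:P) * ('X - d%:P) - b%:P * c%:P = ('X - x%:P) * ('X - y%:P).
Proof.
move=> hs hp.
have -> : ('X - x%:P) * ('X - y%:P) = 'X ^+ 2 - (x + y)%:P * 'X + (x * y)%:P.
  by rewrite polyCD polyCM; ring.
by rewrite hs hp polyCB polyCD !polyCM; ring.
Qed.

Lemma charpoly2 (K : comNzRingType) (B : 'M[K]_2) :
  char_poly B = ('X - (B 0 0)%:P) * ('X - (B 1 1)%:P) - (B 0 1)%:P * (B 1 0)%:P.
Proof. by rewrite /char_poly det2 /char_poly_mx !mxE /= mulr1n mulr0n !sub0r mulrNN. Qed.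

Theorem mainTheorem4 (R : rcfType) (n h : nat) (delta : R)
  (hn : (3 <= n)%N) (hh1 : (1 <= h)%N) (hh2 : (h <= n - 2)%N) (hd : 1 < delta) :
  char_poly (Dmat n h delta)
    = ('X - (a_val n h delta 2)%:P) * 'X^(n - 3) * ('X - (a_val n h delta 1)%:P)
  /\ a_val n h delta 2 < 0 < a_val n h delta 1.
Proof.
move: (@realpart R n h delta hn hh1 hh2 hd) => /= [hs hp hpos].
split => //.
set q := (n - h - 1)%N in hs hp *.
set al := -3 + delta ^+ 2 in hs hp *.
set be := - (1 + delta ^+ 2) in hs hp *.
set ga := 1 - 3 * delta ^+ 2 in hs hp *.
pose U : 'M[R]_(h + q, 1 + 1) :=
  block_mx (const_mx al) (const_mx be) (const_mx be) (const_mx ga).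
pose V : 'M[R]_(1 + 1, h + q) := block_mx (const_mx 1) 0 0 (const_mx 1).
have eUV : Dmat n h delta = U *m V.
  by rewrite /U /V mulmx_block !mulmx0 !addr0 !add0r !constM1 !mulr1.
have eVU : V *m U = block_mx (const_mx (h%:R * al)) (const_mx (h%:R * be))
                             (const_mx (q%:R * be)) (const_mx (q%:R * ga)).
  by rewrite /U /V mulmx_block !mul0mx !addr0 !add0r !constMk !mul1r.
have key : 'X ^+ (1+1) * char_poly (U *m V) = 'X ^+ (h+q) * char_poly (V *m U).
  by rewrite /char_poly /char_poly_mx !map_mxM; exact: sylv.
rewrite -eUV in key.
rewrite eVU charpoly2 in key.
have [e00 e01 e10 e11] := @blk _ (h%:R * al) (h%:R * be) (q%:R * be) (q%:R * ga).
rewrite e00 e01 e10 e11 in key.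
rewrite (@quad _ _ _ _ _ _ _ hs hp) in key.
have ehq : (h + q = (n - 3) + (1 + 1))%N by rewrite /q; lia.
have eX : 'X ^+ (h + q) = 'X ^+ (n - 3) * 'X ^+ (1 + 1) :> {poly R} by rewrite -exprD ehq.
apply: (@mulfI _ ('X ^+ (1 + 1))); first by rewrite expf_neq0 // polyX_eq0.
rewrite key eX; ring.
Qed.
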